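(* Let $B\in M_{Q_0}(\mathbb Z)$ be skew-symmetrizable and $G$ a group of permutations of $Q_0$. Let $(A,\mathbf x)$ be a $G$-invariant seed in $\mathcal A(B)$, with $A=(a_{ij})$ and $\mathbf x=(x_i)_{i\in Q_0}$. Let $\Omega=\{i_1,\ldots,i_n\}$ be a $G$-orbit and $(A^{(n)},\mathbf x^{(n)})=\mu_{i_n}\circ\cdots\circ\mu_{i_1}(A,\mathbf x)$. Then for every $i\in Q_0$, $$x^{(n)}_i=\begin{cases}x_i&\text{if } i\notin\Omega,\\[2pt] \dfrac{\prod_{a_{j,i_k}>0}x_j^{a_{j,i_k}}+\prod_{a_{j,i_k}<0}x_j^{-a_{j,i_k}}}{x_{i_k}}&\text{if } i=i_k \text{ for some } k.\end{cases}$$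
   Context: Skew-symmetrizable: $DB$ skew-symmetric for a positive integer diagonal $D$. Mutation of matrices: $\mu_k(M)=(m'_{ij})$ with $m'_{ij}=-m_{ij}$ if $k\in\{i,j\}$, else $m_{ij}+\tfrac12(|m_{ik}|m_{kj}+m_{ik}|m_{kj}|)$; of seeds: $\mu_k(M,\mathbf y)=(\mu_k(M),\mathbf y')$ with $y'_i=y_i$ ($i\neq k$), $y_ky'_k=\prod_{m_{ik}>0}y_i^{m_{ik}}+\prod_{m_{ik}<0}y_i^{-m_{ik}}$. $\mathcal A(B)=\mathcal A(B,\mathbf u)$ is the cluster algebra with initial seed $(B,\mathbf u)$, $\mathbf u=(u_i)_{i\in Q_0}$ indeterminates; its seeds are those obtained from $(B,\mathbf u)$ by finite sequences of mutations. $G$ acts on $\mathbb Z[\mathbf u^{\pm1}]$ by $gu_i=u_{gi}$. A permutation group $G$ is an admissible automorphism group of a matrix $S=(s_{ij})$ (and $(S,G)$ an admissible pair) if $s_{gi,gj}=s_{ij}$ for all $g,i,j$ and for distinct $i,j$ in the same $G$-orbit there is no path of length $1$ or $2$ from $i$ to $j$ in the quiver of $S$ ($s_{ij}\le0$ and no $k$ with $s_{ik}>0$, $s_{kj}>0$). A seed $(S,\mathbf x)$ of $\mathcal A(B)$ is $G$-invariant if $gx_i=x_{gi}$ for all $g\in G$, $i\in Q_0$, and $(S,G)$ is an admissible pair. *)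

(* Defs.v *)
From HB Require Import structures.
From mathcomp Require Import all_boot all_order all_algebra all_fingroup.
From mathcomp Require Import generic_quotient fraction.
From mathcomp Require Import mpoly.
Set Implicit Arguments. Unset Strict Implicit. Unset Printing Implicit Defensive.
Import Order.TTheory GRing.Theory Num.Theory.
Local Open Scope ring_scope.

(* Q_0 = 'I_n.  Exchange matrices are n x n integer matrices. *)

Definition ambient (n : nat) := {fraction {mpoly int[n]}}.

Definition uvar (n : nat) (i : 'I_n) : ambient n := tofrac (('X_i : {mpoly int[n]})).

Definition skew_symmetrizable (n : nat) (B : 'M[int]_n) : Prop :=
  exists d : 'I_n -> nat, (forall i, (0 < d i)%N) /\
    forall i j, (d i)%:Z * B i j = - ((d j)%:Z * B j i).

Definition mut_mx (n : nat) (k : 'I_n) (M : 'M[int]_n) : 'M[int]_n :=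
  \matrix_(i, j)
    if (i == k) || (j == k) then - M i j
    else M i j + ((`|M i k|%:Z * M k j + M i k * `|M k j|%:Z) %/ 2)%Z.

Definition mut_cl (n : nat) (k : 'I_n) (M : 'M[int]_n) (y : 'I_n -> ambient n)
  : 'I_n -> ambient n :=
  fun i => if i == k then
     (\prod_(j < n | M j k > 0) y j ^+ `|M j k| +
      \prod_(j < n | M j k < 0) y j ^+ `|M j k|) / y k
   else y i.

Definition seed (n : nat) := ('M[int]_n * ('I_n -> ambient n))%type.

Definition mut_seed (n : nat) (k : 'I_n) (s : seed n) : seed n :=
  (mut_mx k s.1, mut_cl k s.1 s.2).

(* mu_{k_m} o ... o mu_{k_1} (s) for the list ks = [k_1; ...; k_m] *)
Definition mut_seq (n : nat) (ks : seq 'I_n) (s : seed n) : seed n :=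
  foldl (fun t k => mut_seed k t) s ks.

Definition is_seed_of (n : nat) (B : 'M[int]_n) (s : seed n) : Prop :=
  exists ks : seq 'I_n, s = mut_seq ks (B, @uvar n).

Definition act_poly (n : nat) (g : {perm 'I_n}) (p : {mpoly int[n]}) : {mpoly int[n]} :=
  p \mPo [tuple 'X_(g i) | i < n].

(* extended to the fraction field Q(u) (independent of the representative) *)
Definition act (n : nat) (g : {perm 'I_n}) (x : ambient n) : ambient n :=
  let r := repr x in tofrac (act_poly g (frac r).1) / tofrac (act_poly g (frac r).2).

Definition same_orbit (n : nat) (G : {group {perm 'I_n}}) (i j : 'I_n) : Prop :=
  exists2 g, g \in G & g i = j.

Definition admissible (n : nat) (S : 'M[int]_n) (G : {group {perm 'I_n}}) : Prop :=
  (forall g, g \in G -> forall i j, S (g i) (g j) = S i j) /\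
  (forall i j, i != j -> same_orbit G i j ->
     S i j <= 0 /\ ~ (exists k, S i k > 0 /\ S k j > 0)).

Definition G_invariant_seed (n : nat) (B : 'M[int]_n) (G : {group {perm 'I_n}})
  (s : seed n) : Prop :=
  is_seed_of B s /\
  (forall g, g \in G -> forall i, act g (s.2 i) = s.2 (g i)) /\
  admissible s.1 G.

(* Main.v *)
Require Import Defs.
From HB Require Import structures.
From mathcomp Require Import all_boot all_order all_algebra all_fingroup.
From mathcomp Require Import generic_quotient fraction.
From mathcomp Require Import mpoly.
From mathcomp Require Import zify.
Import Order.TTheory GRing.Theory Num.Theory.
Set Implicit Arguments. Unset Strict Implicit.
Local Open Scope ring_scope.

Lemma half_e (a b : int) : ((`|a|%:Z * b + a * `|b|%:Z) %/ 2)%Z =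
  if (0 < a) && (0 < b) then a * b else if (a < 0) && (b < 0) then - (a * b) else 0.
Proof.
case: (ltrgt0P a) => Ha; case: (ltrgt0P b) => Hb /=.
all: try lia.
Qed.

Definition skewd (n : nat) (d : 'I_n -> nat) (M : 'M[int]_n) :=
  forall i j, (d i)%:Z * M i j = - ((d j)%:Z * M j i).

Lemma skewd_mut n (d : 'I_n -> nat) (Hd : forall i, (0 < d i)%N) M k :
  skewd d M -> skewd d (mut_mx k M).
Proof.
move=> H i j; rewrite !mxE !half_e.
case: ((i == k) || (j == k)) /orP => Hc.
  have -> : (j == k) || (i == k) by case: Hc => ->; rewrite ?orbT.
  rewrite !mulrN H; lia.
have -> : (j == k) || (i == k) = false by apply/negP => /orP [] h; apply: Hc; auto.
have H1 := H i k; have H2 := H k j; have H3 := H i j; have Hi := Hd i; have Hj := Hd j; have Hk := Hd k.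
have H4 := H j k; have H5 := H k i.
case: (ltrgt0P (M i k)) => ?; case: (ltrgt0P (M k j)) => ?;
case: (ltrgt0P (M j k)) => ?; case: (ltrgt0P (M k i)) => ? /=; nia.
Qed.

Lemma skewd_seq n (d : 'I_n -> nat) (Hd : forall i, (0 < d i)%N) ks (s : seed n) :
  skewd d s.1 -> skewd d (mut_seq ks s).1.
Proof.
elim: ks s => [|k ks IH] s //= Hs; apply: IH; exact: skewd_mut.
Qed.

Lemma gen n (A : 'M[int]_n) (x : 'I_n -> ambient n) (om : seq 'I_n)
  (HA : forall a b, a \in om -> b \in om -> A a b = 0) :
  forall l, uniq l -> {subset l <= om} ->
  forall (M : 'M[int]_n) (y : 'I_n -> ambient n), (forall b, b \in l -> forall j, M j b = A j b) ->
  (forall j, (j \notin om) || (j \in l) -> y j = x j) ->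
  forall i, (mut_seq l (M, y)).2 i =
    if i \in l then
      (\prod_(j < n | A j i > 0) x j ^+ `|A j i| +
       \prod_(j < n | A j i < 0) x j ^+ `|A j i|) / x i
    else y i.
Proof.
elim=> [|k l IH] //= /andP [kl ul] sub M y HM Hy i.
rewrite IH //; last 3 first.
- by move=> b bl; apply: sub; rewrite inE bl orbT.
- move=> b bl j; rewrite mxE.
  have bk : (b == k) = false by apply/negP => /eqP bk; rewrite -bk bl in kl.
  have Hk : M k b = 0 by rewrite HM ?inE ?bl ?orbT // HA // sub // inE ?bl ?eqxx ?orbT.
  rewrite bk orbF Hk; case: (j == k) /eqP => [->|_].
    by rewrite Hk oppr0 HA // sub // inE ?bl ?eqxx ?orbT.
  rewrite HM ?inE ?bl ?orbT //. lia.
- move=> j /orP hj; rewrite /mut_cl.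
  have jk : (j == k) = false.
    apply/negP => /eqP jk; case: hj; rewrite jk; [by rewrite sub // inE eqxx | by rewrite (negbTE kl)].
  rewrite /= jk Hy // inE; case: hj => ->; rewrite ?orbT //.
rewrite inE; case: (i == k) /eqP => [->|ik] /=.
  rewrite (negbTE kl) /mut_cl eqxx /=.
  have HMk := HM k (mem_head k l).
  have ko : k \in om by apply: sub; exact: mem_head.
  have Hyj : forall j, A j k != 0 -> y j = x j.
    move=> j nz; apply: Hy; case jo: (j \in om) => //=.
    by rewrite HA // eqxx in nz.
  rewrite (Hy k) ?inE ?eqxx ?orbT //.
  congr ((_ + _) / _); apply: eq_big => j /=; rewrite ?HMk // => Hj; rewrite Hyj //.
    by rewrite gt_eqF.
  by rewrite lt_eqF.
by rewrite /mut_cl; case: (i \in l) => //; move/eqP/negbTE: ik => ->.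
Qed.

Theorem mainTheorem10 (n : nat) (B : 'M[int]_n) (G : {group {perm 'I_n}})
  (A : 'M[int]_n) (x : 'I_n -> ambient n) (i0 : 'I_n) (om : seq 'I_n) :
  skew_symmetrizable B ->
  G_invariant_seed B G (A, x) ->
  uniq om -> (forall i, i \in om <-> same_orbit G i0 i) ->
  forall i : 'I_n,
    (mut_seq om (A, x)).2 i =
    if i \in om then
      (\prod_(j < n | A j i > 0) x j ^+ `|A j i| +
       \prod_(j < n | A j i < 0) x j ^+ `|A j i|) / x i
    else x i.
Proof.
move=> [d [Hd HB]] [[ks Hs] [_ [_ Hadm]]] uom Hom i.
have SA : skewd d A.
  have -> : A = (A, x).1 by [].
  by rewrite Hs; apply: skewd_seq.
have orb : forall a b, a \in om -> b \in om -> same_orbit G a b.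
  move=> a b /Hom [ga gaG ga0] /Hom [gb gbG gb0].
  exists (ga^-1 * gb)%g; first by rewrite groupM ?groupV.
  by rewrite permM -ga0 permK.
have HA : forall a b, a \in om -> b \in om -> A a b = 0.
  move=> a b ao bo.
  have h1 := SA a b; have h2 := Hd a; have h3 := Hd b.
  case: (a =P b) => [ab | /eqP nab].
    subst b; lia.
  have [c1 _] := Hadm a b nab (orb a b ao bo).
  have [c2 _] := Hadm b a (negbT (introF eqP (fun e => (negP nab) (introT eqP (esym e))))) (orb b a bo ao).
  simpl in c1, c2; lia.
apply: (gen HA) => //; by move=> j ->; rewrite orbT.
Qed.
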